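(* Let $\Gamma=F_r$ ($r\ge2$) be the free group, $Y$ its Gromov boundary with the natural $\Gamma$-action, $\{\Gamma_n\}$ a strictly decreasing sequence of finite-index normal subgroups of $\Gamma$ with $\bigcap_n\Gamma_n=\{e_\Gamma\}$, and $Z=\varprojlim\Gamma/\Gamma_n$ with the left translation action of $\Gamma$. Then the product action $\Gamma\curvearrowright Y\times Z$ is minimal.
   Context: $Y$ is the set of infinite reduced words $(x_n)_{n\in\mathbb N}$ in $S\cup S^{-1}$, $S$ a free generating set (i.e. $x_{n+1}\ne x_n^{-1}$), a closed subset of $(S\cup S^{-1})^{\mathbb N}$, with $\Gamma$ acting by concatenation and cancellation. $Z$ is the compact metrizable group of compatible sequences in $\prod_n\Gamma/\Gamma_n$, containing $\Gamma$ as a dense subgroup. *)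

(* Defs.v *)
From mathcomp Require Import all_boot.
Set Implicit Arguments. Unset Strict Implicit. Unset Printing Implicit Defensive.

(* Letters of S ∪ S^{-1}: (i, false) = s_i, (i, true) = s_i^{-1}. *)
Definition letter (r : nat) := ('I_r * bool)%type.
Definition linv (r : nat) (a : letter r) : letter r := (a.1, ~~ a.2).

Fixpoint reducedb (r : nat) (w : seq (letter r)) : bool :=
  match w with
  | a :: ((b :: _) as w') => (b != linv a) && reducedb w'
  | _ => true
  end.

Definition push (r : nat) (a : letter r) (s : seq (letter r)) : seq (letter r) :=
  match s with
  | b :: s' => if b == linv a then s' else a :: s
  | [::] => [:: a]
  end.
Definition reduce (r : nat) (w : seq (letter r)) : seq (letter r) :=
  foldr (@push r) [::] w.

Lemma reducedb_tail (r : nat) (b : letter r) s : reducedb (b :: s) -> reducedb s.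
Proof. by case: s => //= c s /andP[]. Qed.

Lemma reduce_reduced (r : nat) (w : seq (letter r)) : reducedb (reduce w).
Proof.
elim: w => [|a w IH] //=; rewrite /push.
case: (reduce w) IH => [|b s] //= IH.
case: ifP => [_|/negbT nb]; first exact: reducedb_tail IH.
by rewrite /= nb IH.
Qed.

Definition FG (r : nat) := {w : seq (letter r) | reducedb w}.
Definition fg_one (r : nat) : FG r := exist _ [::] isT.
Definition fg_mul (r : nat) (g h : FG r) : FG r :=
  exist _ (reduce (sval g ++ sval h)) (reduce_reduced _).
Definition fg_inv (r : nat) (g : FG r) : FG r :=
  exist _ (reduce (rev (map (@linv r) (sval g)))) (reduce_reduced _).

Definition is_subgroup (r : nat) (H : FG r -> Prop) : Prop :=
  H (fg_one r) /\ (forall g h, H g -> H h -> H (fg_mul g h)) /\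
  (forall g, H g -> H (fg_inv g)).
Definition is_normal (r : nat) (H : FG r -> Prop) : Prop :=
  forall g h, H h -> H (fg_mul (fg_mul g h) (fg_inv g)).
Definition finite_index (r : nat) (H : FG r -> Prop) : Prop :=
  exists (n : nat) (t : 'I_n -> FG r), forall g, exists i, H (fg_mul (fg_inv (t i)) g).
Definition strictly_decreasing (r : nat) (Gam : nat -> FG r -> Prop) : Prop :=
  forall n, (forall g, Gam n.+1 g -> Gam n g) /\ (exists g, Gam n g /\ ~ Gam n.+1 g).
Definition trivial_intersection (r : nat) (Gam : nat -> FG r -> Prop) : Prop :=
  forall g, (forall n, Gam n g) -> g = fg_one r.

(* Gromov boundary Y: infinite reduced words *)
Definition in_Y (r : nat) (y : nat -> letter r) : Prop :=
  forall n, y n.+1 != linv (y n).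

Definition prepend (r : nat) (s : seq (letter r)) (y : nat -> letter r) : nat -> letter r :=
  fun n => if n < size s then nth (y 0) s n else y (n - size s).

(* concatenate (reversed word l) with y, cancelling *)
Fixpoint act_rev (r : nat) (l : seq (letter r)) (y : nat -> letter r) : nat -> letter r :=
  match l with
  | a :: l' => if a == linv (y 0) then act_rev l' (fun n => y n.+1) else prepend (rev l) y
  | [::] => y
  end.
Definition actY (r : nat) (g : FG r) (y : nat -> letter r) : nat -> letter r :=
  act_rev (rev (sval g)) y.

(* Z = lim Γ/Γ_n: a point is a sequence of representatives z n of cosets z n Γ_n,
   compatible: z (n+1) Γ_n = z n Γ_n. *)
Definition in_Z (r : nat) (Gam : nat -> FG r -> Prop) (z : nat -> FG r) : Prop :=
  forall n, Gam n (fg_mul (fg_inv (z n)) (z n.+1)).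
Definition actZ (r : nat) (g : FG r) (z : nat -> FG r) : nat -> FG r :=
  fun n => fg_mul g (z n).

(* basic open neighbourhoods of (y', z') in Y × Z (product topology):
   first k letters agree with y', and level-m coset equals z' m Γ_m *)
Definition in_basic_nbhd (r : nat) (Gam : nat -> FG r -> Prop)
  (y' : nat -> letter r) (z' : nat -> FG r) (k m : nat)
  (y : nat -> letter r) (z : nat -> FG r) : Prop :=
  (forall i, i < k -> y i = y' i) /\ Gam m (fg_mul (fg_inv (z m)) (z' m)).

(* minimality: every orbit of Γ on Y × Z is dense *)
Definition minimal_YZ (r : nat) (Gam : nat -> FG r -> Prop) : Prop :=
  forall y z, in_Y y -> in_Z Gam z ->
  forall y' z', in_Y y' -> in_Z Gam z' ->
  forall k m, exists g : FG r, in_basic_nbhd Gam y' z' k m (actY g y) (actZ g z).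

(* Main.v *)
Require Import Defs.
From mathcomp Require Import all_boot.
From Stdlib Require Import ClassicalEpsilon.
Set Implicit Arguments. Unset Strict Implicit. Unset Printing Implicit Defensive.

Section W.
Variable r : nat.
Implicit Types (a b c : letter r) (u v s t : seq (letter r)).

Lemma linvK a : linv (linv a) = a.
Proof. by case: a => i bo; rewrite /linv /= negbK. Qed.

Lemma linv_neq a : (a == linv a) = false.
Proof. by case: a => i [] ; rewrite /linv /= xpair_eqE /= andbF. Qed.

Lemma push_reduced a s : reducedb s -> reducedb (push a s).
Proof.
case: s => [|b s] //= H.
case: ifP => [_|/negbT nb]; first exact: reducedb_tail H.
by rewrite /= nb H.
Qed.

Lemma foldr_push_reduced u s : reducedb s -> reducedb (foldr (@push r) s u).
Proof. by move=> Hs; elim: u => //= a u IH; exact: push_reduced. Qed.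

Lemma reduce_id s : reducedb s -> reduce s = s.
Proof.
elim: s => // a s IH H /=; rewrite IH; last exact: reducedb_tail H.
case: s H {IH} => //= b s /andP[nb _]; by rewrite (negbTE nb).
Qed.

Lemma pushK a s : reducedb s -> push a (push (linv a) s) = s.
Proof.
case: s => [|b s] /=; first by rewrite eqxx.
case: ifP => [/eqP E|/negbT nb] H.
  rewrite linvK in E; subst b.
  case: s H => [|c s] //= /andP[nc _]. by rewrite (negbTE nc).
by rewrite /= eqxx.
Qed.

Lemma foldr_push_reduce u s : reducedb s ->
  foldr (@push r) s (reduce u) = foldr (@push r) s u.
Proof.
move=> Hs; elim: u => //= a u IH.
rewrite -IH.
have : reducedb (reduce u) by exact: reduce_reduced.
case: (reduce u) => [|b t] //= Ht.
case: ifP => [/eqP E|_] //=.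
subst b. rewrite pushK //. exact: foldr_push_reduced.
Qed.

Lemma reduce_cat u v : reduce (u ++ v) = foldr (@push r) (reduce v) u.
Proof. by rewrite /reduce foldr_cat. Qed.

Lemma reduce_catr u v : reduce (u ++ reduce v) = reduce (u ++ v).
Proof. by rewrite !reduce_cat reduce_id // reduce_reduced. Qed.

Lemma reduce_catl u v : reduce (reduce u ++ v) = reduce (u ++ v).
Proof. by rewrite !reduce_cat foldr_push_reduce // reduce_reduced. Qed.

Lemma reduce_cancel u v : reduce (rev (map (@linv r) u) ++ u ++ v) = reduce v.
Proof.
elim: u => //= a u IH.
rewrite rev_cons -cats1 -catA /= reduce_cat /=.
rewrite -(linvK a) {1}linvK pushK; last exact: reduce_reduced.
by rewrite -reduce_cat.
Qed.

Lemma rev_map_linvK u : rev (map (@linv r) (rev (map (@linv r) u))) = u.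
Proof.
by rewrite map_rev revK -map_comp (eq_map (g := id)) ?map_id // => x /=; rewrite linvK.
Qed.

Lemma reduce_cancel' u v : reduce (u ++ rev (map (@linv r) u) ++ v) = reduce v.
Proof. by rewrite -{1}(rev_map_linvK u) reduce_cancel. Qed.

Lemma red_cat_split u v : reducedb u -> reducedb v ->
  exists u1 s v1, [/\ u = u1 ++ s, v = rev (map (@linv r) s) ++ v1
                    & reduce (u ++ v) = u1 ++ v1].
Proof.
move=> Hu Hv; elim: u Hu => [|a u IH] Hu.
  by exists [::], [::], v; rewrite reduce_id.
have [u1 [s [v1 [E1 E2 E3]]]] := IH (reducedb_tail Hu).
rewrite cat_cons /= E3.
case: u1 E1 E3 => [|c u1] E1 E3 /=.
  case: v1 E2 E3 => [|d v1] E2 E3 /=.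
    by exists [:: a], s, [::]; rewrite E1.
  case: ifP => [/eqP Ed|_].
    subst d; exists [::], (a :: s), v1; split => //; first by rewrite E1.
    by rewrite E2 rev_cons /= cat_rcons.
  by exists [:: a], s, (d :: v1); rewrite E1.
have nc : c != linv a by move: Hu; rewrite E1 /= => /andP[].
rewrite (negbTE nc).
by exists (a :: c :: u1), s, v1; rewrite E1.
Qed.

Lemma nseq_reduced a n : reducedb (nseq n a).
Proof. elim: n => // [[|n]] //= IH. by rewrite IH linv_neq. Qed.

End W.

Section G.
Variable r : nat.
Implicit Types g h k : FG r.

Lemma fg_eq g h : sval g = sval h -> g = h.
Proof.
case: g h => [u pu] [v pv] /= E; subst v.
by rewrite (bool_irrelevance pu pv).
Qed.

Lemma fmulA g h k : fg_mul (fg_mul g h) k = fg_mul g (fg_mul h k).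
Proof. by apply: fg_eq => /=; rewrite reduce_catl reduce_catr catA. Qed.

Lemma fmul1g g : fg_mul (fg_one r) g = g.
Proof. by apply: fg_eq => /=; rewrite reduce_id //; case: g. Qed.

Lemma fmulg1 g : fg_mul g (fg_one r) = g.
Proof. by apply: fg_eq => /=; rewrite cats0 reduce_id //; case: g. Qed.

Lemma fmulVg g : fg_mul (fg_inv g) g = fg_one r.
Proof.
apply: fg_eq => /=; rewrite reduce_catl.
by have := reduce_cancel (sval g) [::]; rewrite cats0.
Qed.

Lemma fmulgV g : fg_mul g (fg_inv g) = fg_one r.
Proof.
apply: fg_eq => /=; rewrite reduce_catr.
by have := reduce_cancel' (sval g) [::]; rewrite cats0.
Qed.

Lemma finv_uniq g h : fg_mul g h = fg_one r -> h = fg_inv g.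
Proof.
move=> E; by rewrite -(fmul1g h) -(fmulVg g) fmulA E fmulg1.
Qed.

Lemma finvK g : fg_inv (fg_inv g) = g.
Proof. by symmetry; apply: finv_uniq; rewrite fmulVg. Qed.

Lemma finvM g h : fg_inv (fg_mul g h) = fg_mul (fg_inv h) (fg_inv g).
Proof.
symmetry; apply: finv_uniq.
by rewrite fmulA -(fmulA h) fmulgV fmul1g fmulgV.
Qed.

End G.

Section P.
Variable r : nat.

Definition pow (a : letter r) n : FG r := exist _ (nseq n a) (nseq_reduced a n).

Lemma pow_add a i j : fg_mul (pow a i) (pow a j) = pow a (i + j).
Proof. by apply: fg_eq => /=; rewrite -nseqD reduce_id // nseq_reduced. Qed.

Lemma pow_in_H (H : FG r -> Prop) a : is_subgroup H -> finite_index H ->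
  exists e, 0 < e /\ H (pow a e).
Proof.
move=> [H1 [HM HV]] [n [t Ht]].
have Hf : forall j : 'I_n.+1, exists i, H (fg_mul (fg_inv (t i)) (pow a j)) by move=> j; exact: Ht.
pose f (j : 'I_n.+1) := proj1_sig (constructive_indefinite_description _ (Hf j)).
have Hfj : forall j, H (fg_mul (fg_inv (t (f j))) (pow a j)).
  by move=> j; rewrite /f; case: constructive_indefinite_description.
case: (boolP (injectiveb f)) => [/injectiveP inj | /injectivePn [i [j nij eij]]].
  by have := leq_card f inj; rewrite !card_ord ltnn.
wlog lij : i j nij eij / i < j.
  move=> W; case: (ltngtP i j) => [l|l|/val_inj E]; first exact: W l.
    by apply: (W j i) => //; rewrite eq_sym.
  by rewrite E eqxx in nij.
exists (j - i); split; first by rewrite subn_gt0.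
have := HM _ _ (HV _ (Hfj i)) (Hfj j).
rewrite finvM finvK eij fmulA -(fmulA (t (f j))) fmulgV fmul1g.
rewrite -{1}(subnKC (ltnW lij)) -pow_add -fmulA fmulVg fmul1g.
by [].
Qed.

Lemma pow_mul_in_H (H : FG r -> Prop) a e K : is_subgroup H -> H (pow a e) -> H (pow a (e * K)).
Proof.
move=> [H1 [HM HV]] He; elim: K => [|K IH].
  by rewrite muln0; have -> : pow a 0 = fg_one r by apply: fg_eq.
by rewrite mulnS -pow_add; apply: HM.
Qed.

End P.

Section M.
Variable r : nat.
Implicit Types (a b c : letter r) (u v s t w x : seq (letter r)).

Lemma map_linv_nseq p a : rev (map (@linv r) (nseq p a)) = nseq p (linv a).
Proof. by rewrite map_nseq rev_nseq. Qed.

Lemma word_main w x a b na nb :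
  reducedb w -> reducedb x -> size x < na -> size x < nb ->
  a.2 = false -> b.2 = false ->
  (forall w1 c, w = rcons w1 c -> a != linv c) ->
  exists v, reduce (w ++ reduce (nseq na a ++ reduce (x ++ nseq nb b))) = w ++ rcons v b.
Proof.
move=> Hw Hx lxa lxb a2 b2 Hwa.
have [x1 [s [v1 [Ex Eb ER1]]]] := red_cat_split Hx (nseq_reduced b nb).
have lsx : size s <= size x by rewrite Ex size_cat leq_addl.
have Ev1 : v1 = nseq (nb - size s) b.
  have := congr1 (drop (size s)) Eb.
  by rewrite drop_nseq drop_size_cat // size_rev size_map.
have [j' Ej] : exists j', nb - size s = j'.+1.
  by exists (nb - size s).-1; rewrite prednK // subn_gt0 (leq_ltn_trans lsx).
rewrite Ej in Ev1.
rewrite ER1 Ev1.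
have Hx1 : size x1 <= size x by rewrite Ex size_cat leq_addr.
have HR1 : reducedb (x1 ++ nseq j'.+1 b) by rewrite -Ev1 -ER1 reduce_reduced.
have [u1 [s' [v2 [Ea Er ER2]]]] := red_cat_split (nseq_reduced a na) HR1.
have Es' : s' = nseq (na - size u1) a.
  have := congr1 (drop (size u1)) Ea. by rewrite drop_nseq drop_size_cat.
set p := na - size u1 in Es'.
rewrite Es' map_linv_nseq in Er.
have lp : p <= size x1.
  rewrite leqNgt; apply/negP => lt.
  have := congr1 (nth a ^~ (size x1)) Er.
  rewrite nth_cat ltnn subnn /=.
  rewrite nth_cat size_nseq lt nth_nseq lt => E.
  by move: b2; rewrite E /linv /= a2.
have Ev2 : v2 = drop p x1 ++ nseq j'.+1 b.
  have := congr1 (drop p) Er.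
  rewrite [drop p (nseq _ _ ++ _)]drop_size_cat ?size_nseq // => <-.
  rewrite drop_cat; case: ltnP => // ge.
  have -> : p = size x1 by apply/eqP; rewrite eqn_leq lp ge.
  by rewrite drop_size subnn drop0.
have su1 : 0 < size u1.
  have : size (nseq na a) = size u1 + p by rewrite Ea size_cat Es' size_nseq.
  rewrite size_nseq => E; rewrite lt0n; apply/eqP => E0; move: E; rewrite E0 add0n => E.
  by move: lxa; rewrite E ltnNge (leq_trans lp Hx1).
have Eu1 : u1 = a :: nseq (size u1).-1 a.
  have := congr1 (take (size u1)) Ea.
  rewrite take_nseq ?take_size_cat //; last by rewrite -(size_nseq na a) Ea size_cat leq_addr.
  by case: (size u1) su1 => // k _ <-.
rewrite ER2 Ev2.
set R2 := u1 ++ drop p x1 ++ nseq j'.+1 b.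
have HR2 : reducedb R2 by rewrite /R2 -Ev2 -ER2 reduce_reduced.
have [w1 [s3 [v3 [Ew ER Eres]]]] := red_cat_split Hw HR2.
case/lastP: s3 Ew ER Eres => [|s0 c] Ew ER Eres.
  move: ER; rewrite /= => ER; rewrite Eres -ER Ew cats0.
  exists (u1 ++ drop p x1 ++ nseq j' b).
  rewrite /R2; have -> : nseq j'.+1 b = nseq j' b ++ [:: b] by rewrite -addn1 nseqD.
  by rewrite /R2 -cats1 -!catA.
exfalso.
move: ER; rewrite /R2 map_rcons rev_rcons Eu1 /= => -[E _].
by move: (Hwa (w1 ++ s0) c); rewrite Ew rcons_cat E eqxx => /(_ erefl).
Qed.

End M.

Lemma other_idx r (i : 'I_r) : 2 <= r -> exists j : 'I_r, j != i.
Proof.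
move=> hr.
have h0 : 0 < r by apply: ltnW.
case: (eqVneq (nat_of_ord i) 0) => [E|E].
  by exists (Ordinal hr); apply/eqP => /(congr1 val) /=; rewrite E.
by exists (Ordinal h0); apply/eqP => /(congr1 val) /= E'; rewrite -E' eqxx in E.
Qed.

Lemma mkseq_reduced r (y' : nat -> letter r) k : in_Y y' -> reducedb (mkseq y' k).
Proof.
move=> Hy; rewrite /mkseq; elim: k 0 => // [[|k]] IH s //=.
move: (IH s.+1) => /=; by rewrite Hy => ->.
Qed.

Theorem lemma5p1 (r : nat) (Gam : nat -> FG r -> Prop) :
  2 <= r ->
  (forall n, is_subgroup (Gam n)) ->
  (forall n, is_normal (Gam n)) ->
  (forall n, finite_index (Gam n)) ->
  strictly_decreasing Gam ->
  trivial_intersection Gam ->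
  minimal_YZ Gam.
Proof.
move=> hr Hsub Hnorm Hfin _ _ y z Hy Hz y' z' Hy' Hz' k m.
have [H1 [HM HV]] := Hsub m.
set w := mkseq y' k.
have Hw : reducedb w by exact: mkseq_reduced.
have [ib nib] := other_idx ((y 0).1) hr.
have [ia nia] := other_idx ((last (y 0) w).1) hr.
set a : letter r := (ia, false).
set b : letter r := (ib, false).
pose W : FG r := exist _ w Hw.
pose C := fg_mul (z' m) (fg_inv (z m)).
pose X := fg_mul (fg_inv W) C.
set x := sval X.
have Hx : reducedb x by rewrite /x; exact: (proj2_sig X).
have [ea [ea0 Hea]] := pow_in_H a (Hsub m) (Hfin m).
have [eb [eb0 Heb]] := pow_in_H b (Hsub m) (Hfin m).
set na := ea * (size x).+1.
set nb := eb * (size x).+1.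
have lna : size x < na by rewrite /na leq_pmull.
have lnb : size x < nb by rewrite /nb leq_pmull.
pose A := pow a na.
pose B := pow b nb.
have HA : Gam m A by exact: pow_mul_in_H.
have HB : Gam m B by exact: pow_mul_in_H.
pose g := fg_mul W (fg_mul A (fg_mul X B)).
have Hwa : forall w1 c, w = rcons w1 c -> a != linv c.
  move=> w1 c E; apply/eqP => Ea; move: nia; rewrite E last_rcons.
  have : (linv c).1 = ia by rewrite -Ea.
  by rewrite /linv /= => ->; rewrite eqxx.
have [v Ev] := @word_main r w x a b na nb Hw Hx lna lnb erefl erefl Hwa.
exists g; split.
  move=> i lik.
  rewrite /actY (_ : sval g = w ++ rcons v b) //.
  rewrite -rcons_cat rev_rcons /=.
  have -> : (b == linv (y 0)) = false.
    by rewrite /b /linv xpair_eqE /= (negbTE nib).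
  rewrite /prepend rev_cons revK size_rcons size_cat size_mkseq.
  rewrite ltnS (leq_trans (ltnW lik) (leq_addr _ _)) nth_rcons size_cat size_mkseq.
  by rewrite (leq_trans lik (leq_addr _ _)) nth_cat size_mkseq lik nth_mkseq.
rewrite /actZ.
have h1 := Hnorm m (fg_inv (z m)) _ (HV _ HB).
have h2 := Hnorm m (fg_inv (z' m)) _ (HV _ (Hnorm m W _ HA)).
have := HM _ _ h1 h2.
rewrite /g /X /C !finvM !finvK !fmulA.
by [].
Qed.
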